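(* Let $A$ be a functionally continuous normed algebra. Then the following are equivalent: (1) the topology of $A$ is defined by a uniform norm, i.e. a norm $\|\cdot\|$ satisfying $\|x^2\|=\|x\|^2$ for all $x\in A$ (so $A$ is a uniform normed algebra); (2) $A$ has a largest closed, idempotent, absolutely convex, bounded subset, i.e. a closed, idempotent, absolutely convex, bounded subset containing every closed, idempotent, absolutely convex, bounded subset of $A$.
   Context: All algebras are complex, commutative and have a unit. A normed algebra is an algebra with a submultiplicative norm. For a topological algebra $A$, $M^*(A)$ is the set of nonzero multiplicative linear functionals and $M(A)$ the set of nonzero continuous ones; $A$ is functionally continuous if $M^*(A)=M(A)$. A subset $S$ of an algebra is idempotent if $S\cdot S\subseteq S$, i.e. $xy\in S$ for all $x,y\in S$. Bounded means bounded in the normed (topological vector space) sense. *)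

(* Defs.v *)
From Stdlib Require Import Reals.
Open Scope R_scope.
Set Implicit Arguments.

Definition C : Type := (R * R)%type.
Definition C0 : C := (0, 0).
Definition C1 : C := (1, 0).
Definition Cadd (a b : C) : C := (fst a + fst b, snd a + snd b).
Definition Cmul (a b : C) : C :=
  (fst a * fst b - snd a * snd b, fst a * snd b + snd a * fst b).
Definition Copp (a : C) : C := (- fst a, - snd a).
Definition Cmod (a : C) : R := sqrt (fst a * fst a + snd a * snd a).

(** * Complex, commutative, unital normed algebras
    (norm submultiplicative; no normalisation of the unit is required). *)
Record normed_algebra : Type := NormedAlgebra {
  car :> Type;
  zero : car;
  one : car;
  add : car -> car -> car;
  opp : car -> car;
  mul : car -> car -> car;
  scal : C -> car -> car;
  norm : car -> R;
  addA : forall x y z, add x (add y z) = add (add x y) z;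
  addC : forall x y, add x y = add y x;
  add0 : forall x, add zero x = x;
  addN : forall x, add x (opp x) = zero;
  scal1 : forall x, scal C1 x = x;
  scalA : forall a b x, scal a (scal b x) = scal (Cmul a b) x;
  scalDr : forall a x y, scal a (add x y) = add (scal a x) (scal a y);
  scalDl : forall a b x, scal (Cadd a b) x = add (scal a x) (scal b x);
  mulA : forall x y z, mul x (mul y z) = mul (mul x y) z;
  mulC : forall x y, mul x y = mul y x;
  mul1 : forall x, mul one x = x;
  mulDl : forall x y z, mul (add x y) z = add (mul x z) (mul y z);
  scal_mul : forall a x y, scal a (mul x y) = mul (scal a x) y;
  norm_eq0 : forall x, norm x = 0 -> x = zero;
  norm_triangle : forall x y, norm (add x y) <= norm x + norm y;
  norm_scal : forall a x, norm (scal a x) = Cmod a * norm x;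
  norm_submult : forall x y, norm (mul x y) <= norm x * norm y
}.

Arguments add {_} _ _.
Arguments opp {_} _.
Arguments mul {_} _ _.
Arguments scal {_} _ _.
Arguments norm {_} _.

Section Notions.
Variable A : normed_algebra.

Definition sub (x y : A) : A := add x (opp y).

Definition open_for (N : A -> R) (U : A -> Prop) : Prop :=
  forall x, U x -> exists r, 0 < r /\ forall y, N (sub y x) < r -> U y.

Definition is_open (U : A -> Prop) : Prop := open_for (@norm A) U.
Definition is_closed (S : A -> Prop) : Prop := is_open (fun x => ~ S x).

Definition is_vs_norm (N : A -> R) : Prop :=
  (forall x, N x = 0 -> x = zero A) /\
  (forall x y, N (add x y) <= N x + N y) /\
  (forall a x, N (scal a x) = Cmod a * N x).

Definition uniform_norm (N : A -> R) : Prop :=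
  is_vs_norm N /\ forall x, N (mul x x) = N x * N x.

Definition topology_defined_by_uniform_norm : Prop :=
  exists N : A -> R, uniform_norm N /\
    forall U : A -> Prop, is_open U <-> open_for N U.

Definition multiplicative_linear (f : A -> C) : Prop :=
  (forall x y, f (add x y) = Cadd (f x) (f y)) /\
  (forall a x, f (scal a x) = Cmul a (f x)) /\
  (forall x y, f (mul x y) = Cmul (f x) (f y)).

Definition nonzero_fun (f : A -> C) : Prop := exists x, f x <> C0.

Definition continuous_fun (f : A -> C) : Prop :=
  forall x eps, 0 < eps -> exists delta, 0 < delta /\
    forall y, norm (sub y x) < delta -> Cmod (Cadd (f y) (Copp (f x))) < eps.

Definition functionally_continuous : Prop :=
  forall f : A -> C, multiplicative_linear f -> nonzero_fun f -> continuous_fun f.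

Definition idempotent (S : A -> Prop) : Prop :=
  forall x y, S x -> S y -> S (mul x y).

Definition absolutely_convex (S : A -> Prop) : Prop :=
  forall x y a b, S x -> S y -> Cmod a + Cmod b <= 1 ->
    S (add (scal a x) (scal b y)).

Definition bounded (S : A -> Prop) : Prop :=
  exists M, forall x, S x -> norm x <= M.

Definition good_set (S : A -> Prop) : Prop :=
  is_closed S /\ idempotent S /\ absolutely_convex S /\ bounded S.

Definition has_largest_good_set : Prop :=
  exists S, good_set S /\ forall T, good_set T -> forall x, T x -> S x.

End Notions.

(* Main.v *)
From Stdlib Require Import Reals Lra Lia Psatz Classical.
Require Import Defs.
From Coquelicot Require Import Rbar Lub.
Open Scope R_scope.

Definition rs (c : R) : C := (c, 0).

Lemma Cmod_rs c : Cmod (rs c) = Rabs c.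
Proof. unfold Cmod, rs; simpl. rewrite Rmult_0_l, Rplus_0_r. apply sqrt_Rsqr_abs. Qed.

Lemma Cmod_ge0 a : 0 <= Cmod a.
Proof. apply sqrt_pos. Qed.

Lemma Cmod_mul a b : Cmod (Cmul a b) = Cmod a * Cmod b.
Proof.
  unfold Cmod, Cmul; destruct a as [a1 a2], b as [b1 b2]; simpl.
  rewrite <- sqrt_mult by nra. f_equal. ring.
Qed.

Lemma Cmod_C0 : Cmod C0 = 0.
Proof. unfold Cmod, C0; simpl. rewrite Rmult_0_l, Rplus_0_r. apply sqrt_0. Qed.

Lemma Cmod_C1 : Cmod C1 = 1.
Proof. unfold Cmod, C1; simpl. rewrite Rmult_0_l, Rplus_0_r, Rmult_1_l. apply sqrt_1. Qed.

Lemma Cmod_eq0 a : Cmod a = 0 -> a = C0.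
Proof.
  unfold Cmod; destruct a as [a1 a2]; simpl; intro H.
  apply sqrt_eq_0 in H; [|nra]. unfold C0. f_equal; nra.
Qed.

Definition Cinv (a : C) : C :=
  (fst a / (fst a * fst a + snd a * snd a), - snd a / (fst a * fst a + snd a * snd a)).

Lemma Cinv_l a : a <> C0 -> Cmul (Cinv a) a = C1.
Proof.
  destruct a as [a1 a2]; intro H; unfold Cmul, Cinv, C1; simpl.
  assert (a1 * a1 + a2 * a2 <> 0).
  { intro E. apply H. unfold C0. f_equal; nra. }
  f_equal; field; auto.
Qed.

Lemma glb_props (E : R -> Prop) :
  (exists t, E t) -> (forall t, E t -> 0 < t) -> (forall t t', E t -> t < t' -> E t') ->
  0 <= real (Glb_Rbar E) /\ (forall t, E t -> real (Glb_Rbar E) <= t) /\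
  (forall t, real (Glb_Rbar E) < t -> E t).
Proof.
  intros [t0 Ht0] Hpos Hup.
  destruct (Glb_Rbar_correct E) as [Hlb Hgl].
  destruct (Glb_Rbar E) as [g| |] eqn:Eg.
  - simpl. split; [|split].
    + assert (Rbar_le (Finite 0) (Finite g)).
      { apply Hgl. intros x Hx. simpl. left. auto. }
      exact H.
    + intros t Ht. exact (Hlb t Ht).
    + intros t Ht. apply NNPP. intro Hn.
      assert (Rbar_le (Finite t) (Finite g)).
      { apply Hgl. intros x Hx. simpl. destruct (Rle_dec t x) as [|Hlt]; auto.
        exfalso. apply Hn. apply (Hup x t Hx). lra. }
      simpl in H. lra.
  - exfalso. exact (Hlb t0 Ht0).
  - exfalso. assert (Rbar_le (Finite 0) m_infty).
    { apply Hgl. intros x Hx. simpl. left. auto. }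
    exact H.
Qed.

Lemma lim1 a b : (forall t, a < t -> b <= t) -> b <= a.
Proof. intro H. destruct (Rle_dec b a); auto. specialize (H ((a+b)/2)). lra. Qed.

Lemma lim2 a b M : 0 < M -> (forall t, a < t -> b <= M * t) -> b <= M * a.
Proof.
  intros HM H. assert (b / M <= a).
  { apply lim1. intros t Ht. specialize (H t Ht). apply Rmult_le_reg_l with M; auto.
    field_simplify; lra. }
  apply Rmult_le_compat_l with (r := M) in H0; [|lra]. field_simplify in H0; lra.
Qed.

Lemma lim3 a b : 0 <= a -> (forall t, a < t -> b <= t * t) -> b <= a * a.
Proof.
  intros Ha H. destruct (Rle_dec b (a*a)); auto. exfalso.
  assert (Hb : 0 <= b) by nra.
  set (s := sqrt b). assert (Hs : s * s = b) by (apply sqrt_sqrt; auto).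
  assert (Hs0 : 0 <= s) by apply sqrt_pos.
  assert (a < s) by nra.
  specialize (H ((a + s) / 2) ltac:(lra)). nra.
Qed.

Section Alg.
Variable A : normed_algebra.

Lemma Aring : ring_theory (zero A) (one A) (@add A) (@mul A) (sub A) (@opp A) eq.
Proof.
  constructor; intros.
  - apply add0.
  - apply addC.
  - apply addA.
  - apply mul1.
  - apply mulC.
  - apply mulA.
  - apply mulDl.
  - reflexivity.
  - apply addN.
Qed.

Add Ring Aring : Aring.

Fixpoint pw (y : A) (n : nat) : A :=
  match n with O => one A | S n => mul y (pw y n) end.

Fixpoint sq (k : nat) (z : A) : A :=
  match k with O => z | S k => mul (sq k z) (sq k z) end.

Lemma scal0 (x : A) : scal C0 x = zero A.
Proof.
  assert (H : scal C0 x = add (scal C0 x) (scal C0 x)).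
  { rewrite <- scalDl. f_equal. unfold Cadd, C0; simpl. f_equal; ring. }
  transitivity (add (scal C0 x) (opp (scal C0 x))); [|apply addN].
  rewrite H at 2. ring_simplify.
  ring.
Qed.

Lemma scal_m1 (x : A) : scal (rs (-1)) x = opp x.
Proof.
  assert (H : add x (scal (rs (-1)) x) = zero A).
  { rewrite <- (scal1 A x) at 1. rewrite <- scalDl.
    replace (Cadd C1 (rs (-1))) with C0. apply scal0.
    unfold Cadd, C1, C0, rs; simpl. f_equal; ring. }
  transitivity (add (add x (scal (rs (-1)) x)) (opp x)); [ring| rewrite H; ring].
Qed.

Lemma scal_mulr a (x y : A) : mul x (scal a y) = scal a (mul x y).
Proof. rewrite (mulC A x), <- scal_mul, (mulC A y). reflexivity. Qed.

Lemma scal_mull a (x y : A) : mul (scal a x) y = scal a (mul x y).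
Proof. rewrite scal_mul. reflexivity. Qed.

Lemma scal_rsM a b (x : A) : scal (rs a) (scal (rs b) x) = scal (rs (a*b)) x.
Proof. rewrite scalA. f_equal. unfold Cmul, rs; simpl. f_equal; ring. Qed.


Lemma norm_vs : is_vs_norm A (@norm A).
Proof. split; [apply norm_eq0| split; [apply norm_triangle | apply norm_scal]]. Qed.

Section VS.
Variable F : A -> R.
Hypothesis HF : is_vs_norm A F.

Lemma F0 : F (zero A) = 0.
Proof. destruct HF as [_ [_ H3]]. rewrite <- (scal0 (zero A)), H3, Cmod_C0. ring. Qed.

Lemma Fopp x : F (opp x) = F x.
Proof. destruct HF as [_ [_ H3]]. rewrite <- scal_m1, H3, Cmod_rs, Rabs_left by lra. ring. Qed.

Lemma Fge0 x : 0 <= F x.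
Proof.
  destruct HF as [_ [H2 _]]. pose proof (H2 x (opp x)) as H. rewrite addN, F0, Fopp in H. lra.
Qed.

Lemma Fsub_sym x y : F (sub A x y) = F (sub A y x).
Proof. replace (sub A x y) with (opp (sub A y x)) by (unfold sub; ring). apply Fopp. Qed.

Lemma Frs c x : F (scal (rs c) x) = Rabs c * F x.
Proof. destruct HF as [_ [_ H3]]. rewrite H3, Cmod_rs. reflexivity. Qed.

Lemma Fsub_tri x y : F y <= F x + F (sub A y x).
Proof.
  destruct HF as [_ [H2 _]]. replace y with (add x (sub A y x)) at 1 by (unfold sub; ring). apply H2.
Qed.

Lemma F_ball_open : open_for A F (fun z => F z < 1).
Proof.
  intros x Hx. exists (1 - F x). split; [lra|]. intros y Hy. pose proof (Fsub_tri x y). lra.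
Qed.

Lemma F_out_open c : 0 <= c -> open_for A F (fun z => ~ F z <= c).
Proof.
  intros Hc x Hx. exists (F x - c). split; [lra|]. intros y Hy.
  pose proof (Fsub_tri y x). rewrite Fsub_sym in H. lra.
Qed.

End VS.

Lemma compare_norms (F G : A -> R) r :
  is_vs_norm A F -> is_vs_norm A G -> 0 < r ->
  (forall y, G y < r -> F y < 1) -> forall y, F y <= (2 / r) * G y.
Proof.
  intros HF HG Hr H y.
  destruct (Req_dec (G y) 0) as [E|E].
  - rewrite ((proj1 HG) y E), (F0 F HF), (F0 G HG). lra.
  - pose proof (Fge0 G HG y) as Gp. assert (Gpos : 0 < G y) by lra.
    set (l := r / (2 * G y)).
    assert (Hl : 0 < l) by (unfold l; apply Rdiv_lt_0_compat; lra).
    assert (Hy : G (scal (rs l) y) < r).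
    { rewrite (Frs G HG), Rabs_pos_eq by lra. unfold l. field_simplify; lra. }
    apply H in Hy. rewrite (Frs F HF), Rabs_pos_eq in Hy by lra.
    unfold l in Hy. 
    assert (r * F y < 2 * G y).
    { apply Rmult_lt_reg_r with (/ (2 * G y)). apply Rinv_0_lt_compat; lra.
      replace (2 * G y * / (2 * G y)) with 1 by (field; lra). 
      replace (r * F y * / (2 * G y)) with (r / (2 * G y) * F y) by (field; lra). exact Hy. }
    apply Rmult_le_reg_l with r; [lra|]. field_simplify; [|lra]. 
    replace (2 * G y) with (2 * G y / 1) in H0 by field. lra.
Qed.


Lemma sq_mul k (x y : A) : sq k (mul x y) = mul (sq k x) (sq k y).
Proof. induction k; simpl; [reflexivity|]. rewrite IHk. ring. Qed.

Lemma F_sq (F : A -> R) : (forall x, F (mul x x) = F x * F x) ->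
  forall k z, F (sq k z) = F z ^ (2 ^ k).
Proof.
  intros H k z. induction k; simpl; [ring|]. rewrite H, IHk, Nat.add_0_r, pow_add. reflexivity.
Qed.

Lemma sq_in (T : A -> Prop) : idempotent A T -> forall k z, T z -> T (sq k z).
Proof. intros H k z Hz. induction k; simpl; auto. Qed.

Lemma nat_lt_2pow k : (k < 2 ^ k)%nat.
Proof. induction k; simpl; lia. Qed.
Lemma nat_le_2pow k : (k <= 2 ^ k)%nat.
Proof. pose proof (nat_lt_2pow k); lia. Qed.

Lemma pow_le1 a n : 0 <= a -> a <= 1 -> a ^ n <= 1.
Proof. intros. rewrite <- (pow1 n). apply pow_incr. lra. Qed.

Lemma pow_bound a K : 0 <= a -> (forall k, a ^ (2 ^ k) <= K) -> a <= 1.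
Proof.
  intros Ha H. destruct (Rle_dec a 1) as [|Hgt]; [assumption|exfalso].
  destruct (Pow_x_infinity a) with (b := K + 1) as [N HN].
  { rewrite Rabs_pos_eq; lra. }
  specialize (HN (2 ^ N)%nat (nat_le_2pow N)). specialize (H N).
  rewrite Rabs_pos_eq in HN by (apply pow_le; lra). lra.
Qed.

Theorem dir12 : topology_defined_by_uniform_norm A -> has_largest_good_set A.
Proof.
  intros [N [[HN HNsq] Htop]].
  assert (Hn := norm_vs).
  destruct (Htop (fun z => norm z < 1)) as [H1 _].
  destruct (H1 (F_ball_open _ Hn) (zero A)) as [r1 [Hr1 Hb1]].
  { rewrite (F0 _ Hn). lra. }
  assert (C1b : forall y, norm y <= (2 / r1) * N y).
  { apply compare_norms; auto. intros y Hy. apply Hb1.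
    replace (sub A y (zero A)) with y by (unfold sub; ring). exact Hy. }
  destruct (Htop (fun z => N z < 1)) as [_ H2].
  destruct (H2 (F_ball_open _ HN) (zero A)) as [r2 [Hr2 Hb2]].
  { rewrite (F0 _ HN). lra. }
  assert (C2b : forall y, N y <= (2 / r2) * norm y).
  { apply compare_norms; auto. intros y Hy. apply Hb2.
    replace (sub A y (zero A)) with y by (unfold sub; ring). exact Hy. }
  set (c1 := 2 / r1) in *. set (c2 := 2 / r2) in *.
  assert (c1p : 0 < c1) by (unfold c1; apply Rdiv_lt_0_compat; lra).
  assert (c2p : 0 < c2) by (unfold c2; apply Rdiv_lt_0_compat; lra).
  exists (fun x => N x <= 1). split; [split; [|split; [|split]]|].
  -
    intros x Hx. exists ((N x - 1) / c2). split.
    { apply Rdiv_lt_0_compat; lra. }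
    intros y Hy Hy1. pose proof (Fsub_tri N HN y x). rewrite (Fsub_sym N HN) in H.
    pose proof (C2b (sub A y x)).
    assert (c2 * norm (sub A y x) < N x - 1).
    { apply Rmult_lt_compat_l with (r := c2) in Hy; [|lra].
      replace (c2 * ((N x - 1) / c2)) with (N x - 1) in Hy by (field; lra). exact Hy. }
    lra.
  -
    intros x y Hx Hy. apply (pow_bound (N (mul x y)) (c2 * (c1 * c1))).
    { apply (Fge0 _ HN). }
    intro k. rewrite <- (F_sq N HNsq), sq_mul.
    pose proof (C2b (mul (sq k x) (sq k y))).
    pose proof (norm_submult A (sq k x) (sq k y)).
    pose proof (C1b (sq k x)) as Q1. pose proof (C1b (sq k y)) as Q2.
    rewrite (F_sq N HNsq) in Q1, Q2.
    assert (N x ^ (2 ^ k) <= 1) by (apply pow_le1; [apply (Fge0 _ HN)| exact Hx]).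
    assert (N y ^ (2 ^ k) <= 1) by (apply pow_le1; [apply (Fge0 _ HN)| exact Hy]).
    assert (0 <= N x ^ (2 ^ k)) by (apply pow_le, (Fge0 _ HN)).
    assert (0 <= N y ^ (2 ^ k)) by (apply pow_le, (Fge0 _ HN)).
    pose proof (Fge0 _ Hn (sq k x)). pose proof (Fge0 _ Hn (sq k y)).
    assert (norm (sq k x) <= c1) by nra.
    assert (norm (sq k y) <= c1) by nra.
    assert (norm (sq k x) * norm (sq k y) <= c1 * c1) by nra.
    nra.
  -
    intros x y a b Hx Hy Hab. destruct HN as [_ [HT HS]].
    eapply Rle_trans; [apply HT|]. rewrite !HS.
    pose proof (Cmod_ge0 a). pose proof (Cmod_ge0 b). nra.
  - exists c1. intros x Hx. pose proof (C1b x). nra.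
  - intros T [_ [HTi [_ [M HM]]]] x Hx.
    apply (pow_bound (N x) (c2 * M)). { apply (Fge0 _ HN). }
    intro k. rewrite <- (F_sq N HNsq). pose proof (C2b (sq k x)).
    pose proof (HM _ (sq_in T HTi k x Hx)). nra.
Qed.


Lemma norm_ge0 (x : A) : 0 <= norm x.
Proof. apply (Fge0 _ norm_vs). Qed.

Lemma absc_one (T : A -> Prop) u y : absolutely_convex A T -> T y -> Cmod u <= 1 -> T (scal u y).
Proof.
  intros H Hy Hu. specialize (H y y u C0 Hy Hy). rewrite Cmod_C0, scal0 in H.
  replace (scal u y) with (add (scal u y) (zero A)) by ring. apply H. lra.
Qed.

Section Max.
Variable S : A -> Prop.
Hypothesis HS : good_set A S.
Hypothesis Hmax : forall T, good_set A T -> forall x, T x -> S x.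

Lemma powers_in_S y K : (forall n, norm (pw y (Datatypes.S n)) <= K) -> S y.
Proof.
  intro HK.
  set (W := fun w : A => forall n, norm (mul w (pw y n)) <= 1).
  set (T := fun z : A => forall w, W w -> W (mul z w)).
  apply (Hmax T).
  2:{ intros w Hw n. unfold W in Hw. replace (mul (mul y w) (pw y n)) with (mul w (pw y (Datatypes.S n)))
        by (simpl; ring). apply Hw. }
  split; [|split; [|split]].
  - intros z Hz.
    apply not_all_ex_not in Hz as [w Hw]. apply imply_to_and in Hw as [Hw Hzw].
    apply not_all_ex_not in Hzw as [n Hn]. apply Rnot_le_lt in Hn.
    set (q := mul w (pw y n)). assert (Hq : norm q <= 1) by apply Hw.
    replace (mul (mul z w) (pw y n)) with (mul z q) in Hn by (unfold q; ring).
    exists (norm (mul z q) - 1). split; [lra|]. intros z' Hz' HTz'.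
    specialize (HTz' w Hw n).
    replace (mul (mul z' w) (pw y n)) with (mul z' q) in HTz' by (unfold q; ring).
    pose proof (Fsub_tri _ norm_vs (mul z' q) (mul z q)).
    replace (sub A (mul z q) (mul z' q)) with (mul (sub A z z') q) in H by (unfold sub; ring).
    pose proof (norm_submult A (sub A z z') q).
    rewrite (Fsub_sym _ norm_vs) in H0. pose proof (norm_ge0 (sub A z' z)). nra.
  - intros z1 z2 H1 H2 w Hw. replace (mul (mul z1 z2) w) with (mul z1 (mul z2 w)) by ring. auto.
  - intros z1 z2 a b H1 H2 Hab w Hw n.
    replace (mul (mul (add (scal a z1) (scal b z2)) w) (pw y n))
      with (add (scal a (mul (mul z1 w) (pw y n))) (scal b (mul (mul z2 w) (pw y n)))).
    2:{ rewrite !mulDl, !scal_mull. reflexivity. }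
    eapply Rle_trans; [apply norm_triangle|]. rewrite !norm_scal.
    pose proof (H1 w Hw n). pose proof (H2 w Hw n).
    pose proof (Cmod_ge0 a). pose proof (Cmod_ge0 b). nra.
  - set (K' := K + norm (one A) + 1).
    assert (HK0 : 0 <= K) by (pose proof (HK O); pose proof (norm_ge0 (pw y 1)); lra).
    assert (HK' : 1 <= K') by (unfold K'; pose proof (norm_ge0 (one A)); lra).
    set (w0 := scal (rs (/ K')) (one A)).
    assert (Hw0 : W w0).
    { intro n. unfold w0. rewrite scal_mull, mul1, norm_scal, Cmod_rs, Rabs_pos_eq
        by (left; apply Rinv_0_lt_compat; lra).
      assert (norm (pw y n) <= K').
      { pose proof (norm_ge0 (one A)). destruct n; [simpl pw; unfold K'; lra|].
        pose proof (HK n). unfold K'. lra. }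
      apply Rmult_le_reg_l with K'; [lra|]. rewrite <- Rmult_assoc, Rinv_r by lra. lra. }
    exists K'. intros z Hz. specialize (Hz w0 Hw0 O). simpl pw in Hz.
    replace (mul (mul z w0) (one A)) with (scal (rs (/ K')) z) in Hz.
    2:{ unfold w0. rewrite (mulC A _ (one A)), mul1, scal_mulr, (mulC A z), mul1. reflexivity. }
    rewrite norm_scal, Cmod_rs, Rabs_pos_eq in Hz by (left; apply Rinv_0_lt_compat; lra).
    assert (0 < / K') by (apply Rinv_0_lt_compat; lra).
    assert (K' * (/ K' * norm z) <= K' * 1) by (apply Rmult_le_compat_l; lra).
    rewrite <- Rmult_assoc, Rinv_r in H0 by lra. lra.
Qed.


Lemma ball_in_S y : norm y < 1 -> S y.
Proof.
  intro Hy. apply (powers_in_S y 1). induction n.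
  - simpl. rewrite (mulC A y), mul1. lra.
  - simpl pw. eapply Rle_trans; [apply norm_submult|].
    simpl pw in IHn. pose proof (norm_ge0 y). pose proof (norm_ge0 (mul y (pw y n))). nra.
Qed.

Definition Eset (x : A) (t : R) : Prop := 0 < t /\ S (scal (rs (/ t)) x).
Definition pf (x : A) : R := real (Glb_Rbar (Eset x)).

Lemma absS : absolutely_convex A S.
Proof. apply HS. Qed.

Lemma idemS : idempotent A S.
Proof. apply HS. Qed.

Lemma Eset_props x : 0 <= pf x /\ (forall t, Eset x t -> pf x <= t) /\ (forall t, pf x < t -> Eset x t).
Proof.
  apply glb_props.
  - exists (norm x + 1). split. pose proof (norm_ge0 x); lra.
    apply ball_in_S. rewrite norm_scal, Cmod_rs. pose proof (norm_ge0 x).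
    rewrite Rabs_pos_eq by (left; apply Rinv_0_lt_compat; lra).
    apply Rmult_lt_reg_l with (norm x + 1); [lra|].
    rewrite <- Rmult_assoc, Rinv_r by lra. lra.
  - intros t [Ht _]; auto.
  - intros t t' [Ht HSt] Htt'. split; [lra|].
    replace (scal (rs (/ t')) x) with (scal (rs (t / t')) (scal (rs (/ t)) x)).
    2:{ rewrite scal_rsM. f_equal. f_equal. field. lra. }
    apply absc_one; auto. apply absS. rewrite Cmod_rs, Rabs_pos_eq.
    apply Rmult_le_reg_l with t'; [lra|]. field_simplify; lra.
    apply Rlt_le, Rdiv_lt_0_compat; lra.
Qed.

Lemma pf_ge0 x : 0 <= pf x.
Proof. apply Eset_props. Qed.
Lemma pf_le x t : Eset x t -> pf x <= t.
Proof. apply Eset_props. Qed.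
Lemma pf_gt x t : pf x < t -> Eset x t.
Proof. apply Eset_props. Qed.

Lemma pf_le_norm x : pf x <= norm x.
Proof.
  apply lim1. intros t Ht. apply pf_le. pose proof (norm_ge0 x). split; [lra|].
  apply ball_in_S. rewrite norm_scal, Cmod_rs.
  rewrite Rabs_pos_eq by (left; apply Rinv_0_lt_compat; lra).
  apply Rmult_lt_reg_l with t; [lra|]. rewrite <- Rmult_assoc, Rinv_r by lra. lra.
Qed.

Variable M : R.
Hypothesis HM0 : 0 < M.
Hypothesis HM : forall x, S x -> norm x <= M.

Lemma norm_le_pf x : norm x <= M * pf x.
Proof.
  apply lim2; auto. intros t Ht. destruct (pf_gt x t Ht) as [Ht0 HSt].
  apply HM in HSt. rewrite norm_scal, Cmod_rs in HSt.
  rewrite Rabs_pos_eq in HSt by (left; apply Rinv_0_lt_compat; lra).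
  apply Rmult_le_compat_l with (r := t) in HSt; [|lra].
  rewrite <- Rmult_assoc, Rinv_r in HSt by lra. lra.
Qed.


Lemma pf_zero x : pf x = 0 -> x = zero A.
Proof.
  intro H. apply norm_eq0. pose proof (norm_le_pf x). pose proof (norm_ge0 x). rewrite H in H0. nra.
Qed.

Lemma pf_tri x y : pf (add x y) <= pf x + pf y.
Proof.
  apply lim1. intros t Ht. set (d := t - pf x - pf y).
  destruct (pf_gt x (pf x + d/2)) as [Ht1 H1]. unfold d; lra.
  destruct (pf_gt y (pf y + d/2)) as [Ht2 H2]. unfold d; lra.
  set (t1 := pf x + d/2) in *. set (t2 := pf y + d/2) in *.
  replace t with (t1 + t2) by (unfold t1, t2, d; lra).
  apply pf_le. split; [lra|].
  replace (scal (rs (/ (t1 + t2))) (add x y)) with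
    (add (scal (rs (t1 / (t1 + t2))) (scal (rs (/ t1)) x)) (scal (rs (t2 / (t1 + t2))) (scal (rs (/ t2)) y))).
  2:{ rewrite !scal_rsM, scalDr. f_equal; f_equal; f_equal; field; lra. }
  apply absS; auto. rewrite !Cmod_rs, !Rabs_pos_eq.
  right. field. lra. apply Rlt_le, Rdiv_lt_0_compat; lra. apply Rlt_le, Rdiv_lt_0_compat; lra.
Qed.

Lemma pf_scal_le a x : pf (scal a x) <= Cmod a * pf x.
Proof.
  apply lim1. intros s Hs. pose proof (Cmod_ge0 a) as Ha. pose proof (pf_ge0 x) as Hp.
  set (d := (s - Cmod a * pf x) / (Cmod a + 1)).
  assert (Hd : 0 < d) by (unfold d; apply Rdiv_lt_0_compat; lra).
  assert (Hd2 : Cmod a * d < s - Cmod a * pf x).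
  { unfold d. apply Rmult_lt_reg_r with (Cmod a + 1); [lra|]. field_simplify; nra. }
  destruct (pf_gt x (pf x + d)) as [Ht HSt]; [lra|].
  set (t := pf x + d) in *.
  assert (Hs0 : 0 < s) by nra.
  apply pf_le. split; [lra|].
  replace (scal (rs (/ s)) (scal a x)) with (scal (Cmul (Cmul (rs (/ s)) a) (rs t)) (scal (rs (/ t)) x)).
  2:{ rewrite !scalA. f_equal. destruct a as [a1 a2]. unfold Cmul, rs; simpl. f_equal; field; lra. }
  apply absc_one; auto. apply absS.
  rewrite !Cmod_mul, !Cmod_rs, (Rabs_pos_eq t) by lra.
  rewrite (Rabs_pos_eq (/ s)) by (left; apply Rinv_0_lt_compat; lra).
  apply Rmult_le_reg_l with s; [lra|]. rewrite <- !Rmult_assoc, Rinv_r by lra. unfold t. nra.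
Qed.

Lemma pf_scal a x : pf (scal a x) = Cmod a * pf x.
Proof.
  apply Rle_antisym; [apply pf_scal_le|].
  destruct (Req_dec (Cmod a) 0) as [E|E].
  - rewrite E, Rmult_0_l. apply pf_ge0.
  - assert (Ha : a <> C0) by (intro; subst; apply E, Cmod_C0).
    pose proof (pf_scal_le (Cinv a) (scal a x)) as H.
    rewrite scalA, Cinv_l, scal1 in H by auto.
    assert (Hm : Cmod (Cinv a) * Cmod a = 1) by (rewrite <- Cmod_mul, Cinv_l, Cmod_C1; auto).
    pose proof (Cmod_ge0 a).
    apply Rmult_le_compat_l with (r := Cmod a) in H; [|lra].
    replace (Cmod a * (Cmod (Cinv a) * pf (scal a x))) with (pf (scal a x)) in H by
      (rewrite <- Rmult_assoc, (Rmult_comm (Cmod a)), Hm; ring). exact H.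
Qed.


Lemma pf_sq_le x : pf (mul x x) <= pf x * pf x.
Proof.
  apply lim3; [apply pf_ge0|]. intros t Ht. destruct (pf_gt x t Ht) as [Ht0 HSt].
  apply pf_le. split; [nra|].
  replace (scal (rs (/ (t * t))) (mul x x)) with (mul (scal (rs (/ t)) x) (scal (rs (/ t)) x)).
  2:{ rewrite scal_mull, scal_mulr, scal_rsM. f_equal. f_equal. field. lra. }
  apply idemS; auto.
Qed.

Lemma pw_even (y : A) k : pw y (k + k) = pw (mul y y) k.
Proof.
  induction k; [reflexivity|]. replace (Datatypes.S k + Datatypes.S k)%nat with (Datatypes.S (Datatypes.S (k + k))) by lia.
  simpl pw. rewrite IHk. ring.
Qed.

Lemma pw_in z k : S z -> S (pw z (Datatypes.S k)).
Proof.
  intro Hz. induction k.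
  - simpl. rewrite (mulC A z), mul1. exact Hz.
  - simpl pw. simpl pw in IHk. apply idemS; auto.
Qed.

Lemma pf_sq_ge x : pf x * pf x <= pf (mul x x).
Proof.
  apply lim1. intros s Hs. destruct (pf_gt _ s Hs) as [Hs0 HSs].
  set (t := sqrt s). assert (Htt : t * t = s) by (apply sqrt_sqrt; lra).
  assert (Ht0 : 0 < t) by (apply sqrt_lt_R0; lra).
  set (y := scal (rs (/ t)) x).
  assert (Hz : S (mul y y)).
  { replace (mul y y) with (scal (rs (/ s)) (mul x x)); auto.
    unfold y. rewrite scal_mull, scal_mulr, scal_rsM. f_equal. f_equal. rewrite <- Htt. field. lra. }
  assert (Hy : S y).
  { apply (powers_in_S y (M + norm y * (M + norm (one A)))).
    intro n. pose proof (norm_ge0 y). pose proof (norm_ge0 (one A)).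
    assert (Hb : forall m, norm (pw (mul y y) m) <= M + norm (one A)).
    { intro m. destruct m; [simpl; lra|]. pose proof (HM _ (pw_in _ m Hz)). lra. }
    destruct (Nat.Even_or_Odd n) as [[m Hm]|[m Hm]].
    - replace (Datatypes.S n) with (Datatypes.S (m + m)) by lia. simpl pw. rewrite pw_even.
      eapply Rle_trans; [apply norm_submult|]. pose proof (Hb m).
      pose proof (norm_ge0 (pw (mul y y) m)). nra.
    - replace (Datatypes.S n) with (Datatypes.S m + Datatypes.S m)%nat by lia. rewrite pw_even.
      pose proof (HM _ (pw_in _ m Hz)). nra. }
  assert (pf x <= t) by (apply pf_le; split; auto).
  pose proof (pf_ge0 x). nra.
Qed.

End Max.

Theorem dir21 : has_largest_good_set A -> topology_defined_by_uniform_norm A.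
Proof.
  intros [S [HS Hmax]].
  pose proof HS as [_ [_ [_ [M0 HM0]]]].
  set (M := Rabs M0 + 1).
  assert (HMp : 0 < M) by (unfold M; pose proof (Rabs_pos M0); lra).
  assert (HM : forall x, S x -> norm x <= M).
  { intros x Hx. pose proof (HM0 x Hx). pose proof (Rle_abs M0). unfold M; lra. }
  exists (pf S). split.
  - split; [split; [|split]|].
    + exact (pf_zero S HS Hmax M HMp HM).
    + exact (pf_tri S HS Hmax).
    + exact (pf_scal S HS Hmax).
    + intro x. apply Rle_antisym.
      * exact (pf_sq_le S HS Hmax x).
      * exact (pf_sq_ge S HS Hmax M HMp HM x).
  - intro U. split.
    + intros HU x Hx. destruct (HU x Hx) as [r [Hr Hb]]. exists (r / M). split.
      { apply Rdiv_lt_0_compat; lra. }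
      intros y Hy. apply Hb. pose proof (norm_le_pf S HS Hmax M HMp HM (sub A y x)).
      apply Rmult_lt_compat_l with (r := M) in Hy; [|lra].
      replace (M * (r / M)) with r in Hy by (field; lra). lra.
    + intros HU x Hx. destruct (HU x Hx) as [r [Hr Hb]]. exists r. split; auto.
      intros y Hy. apply Hb. pose proof (pf_le_norm S HS Hmax (sub A y x)). lra.
Qed.

End Alg.

Theorem theorem3p3 (A : normed_algebra) :
  functionally_continuous A ->
  (topology_defined_by_uniform_norm A <-> has_largest_good_set A).
Proof.
  intros _. split; [apply dir12 | apply dir21].
Qed.
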